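(* Let $n=2$. For every pair of distributions $G_1,G_2$ satisfying the standing assumptions, at least one of the qualified majority rules $f^{(1)}$ or $f^{(2)}$ solves program (OPT). In particular, the maximal expected welfare in (OPT) is achieved by an ordinal SCF.
   Context: There are $n\ge 2$ agents $N=\{1,\dots,n\}$ choosing between a Reform $R$ and the Status quo $S$. Agent $i$ gets utility $0$ if $S$ is chosen and utility $v_i\in\mathbb{R}$ if $R$ is chosen. Values are independent random variables $\tilde v_1,\dots,\tilde v_n$, $\tilde v_i\sim G_i$ (Borel probability distributions on $\mathbb{R}$, $G_i(0)=\Pr(\tilde v_i\le 0)$). Standing assumptions: all $\tilde v_i$ have the same support $V$ with $0\notin V$; $\mathbb{E}|\tilde v_i|<\infty$; $p_i:=1-G_i(0)\in(0,1)$. The distributions need not be identical. An SCF is a Borel measurable $f:V^n\to[0,1]$ (probability of choosing $R$). $f$ is anonymous if $f(v)=f(\pi v)$ for every $v\in V^n$ and every permutation $\pi$ of $N$, where $\pi v=(v_{\pi(1)},\dots,v_{\pi(n)})$. $f$ is BIC if for every $i$ and all $v_i,v_i'\in V$: $v_i\,\mathbb{E}(f(v_i,\tilde v_{-i}))\ge v_i\,\mathbb{E}(f(v_i',\tilde v_{-i}))$ (expectation over $\tilde v_{-i}=(\tilde v_j)_{j\neq i}$). Expected welfare is $W(f)=\mathbb{E}\big(f(\tilde v)\sum_{i=1}^n\tilde v_i\big)$. Program (OPT): maximize $W(f)$ subject to $f$ being anonymous and BIC. For $v\in V^n$ let $\chi(v)=\{i\in N: v_i>0\}$. $f$ is ordinal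 if $f(v)=f(v')$ whenever $\chi(v)=\chi(v')$. For $k\in\{1,\dots,n\}$, the qualified majority rule $f^{(k)}$ is $f^{(k)}(v)=1$ if $|\chi(v)|\ge k$ and $f^{(k)}(v)=0$ otherwise. *)

(* Defs.v *)
From HB Require Import structures.
From mathcomp Require Import all_boot all_order all_algebra.
From mathcomp Require Import all_classical all_reals all_analysis.
Set Implicit Arguments. Unset Strict Implicit. Unset Printing Implicit Defensive.
Import Order.TTheory GRing.Theory Num.Theory.
Import numFieldNormedType.Exports.
Local Open Scope classical_set_scope.
Local Open Scope ring_scope.

Section Defs.
Variable R : realType.

Definition dsupport (mu : probability R R) : set R :=
  [set x : R | forall e : R, 0 < e -> (0 < mu `](x - e)%R, (x + e)%R[%classic)%E].

(* A social choice function for n = 2, on the profile space V^2 (V the common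
   support).  It is represented as a function on R * R; only its values on
   V * V matter. *)
Definition is_SCF (V : set R) (f : R * R -> R) : Prop :=
  measurable_fun setT f /\ forall v, V v.1 -> V v.2 -> 0 <= f v <= 1.

Definition anonymous (V : set R) (f : R * R -> R) : Prop :=
  forall x y, V x -> V y -> f (x, y) = f (y, x).

Definition interim1 (G2 : probability R R) (f : R * R -> R) (x : R) : \bar R :=
  (\int[G2]_y (f (x, y))%:E)%E.
Definition interim2 (G1 : probability R R) (f : R * R -> R) (y : R) : \bar R :=
  (\int[G1]_x (f (x, y))%:E)%E.

Definition BIC (V : set R) (G1 G2 : probability R R) (f : R * R -> R) : Prop :=
  (forall v v', V v -> V v' ->
     (v%:E * interim1 G2 f v' <= v%:E * interim1 G2 f v)%E) /\
  (forall v v', V v -> V v' ->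
     (v%:E * interim2 G1 f v' <= v%:E * interim2 G1 f v)%E).

Definition welfare (G1 G2 : probability R R) (f : R * R -> R) : \bar R :=
  (\int[(G1 \x G2)%E]_v (f v * (v.1 + v.2))%:E)%E.

(* chi(v) = set of agents with positive value; here its cardinality. *)
Definition nb_pos (v : R * R) : nat := ((0 < v.1)%R + (0 < v.2)%R)%N.

Definition qmaj (k : nat) (v : R * R) : R := if (k <= nb_pos v)%N then 1 else 0.

Definition ordinal_scf (V : set R) (f : R * R -> R) : Prop :=
  forall v w, V v.1 -> V v.2 -> V w.1 -> V w.2 ->
    (0 < v.1) = (0 < w.1) -> (0 < v.2) = (0 < w.2) -> f v = f w.

Definition solves_OPT (V : set R) (G1 G2 : probability R R) (f : R * R -> R) : Prop :=
  [/\ is_SCF V f, anonymous V f, BIC V G1 G2 f &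
     forall g, is_SCF V g -> anonymous V g -> BIC V G1 G2 g ->
       (welfare G1 G2 g <= welfare G1 G2 f)%E].

Definition standing (G1 G2 : probability R R) : Prop :=
  [/\ dsupport G1 = dsupport G2, ~ dsupport G1 0,
      G1.-integrable setT (EFin \o id) /\ G2.-integrable setT (EFin \o id),
      (0 < G1 `]0%R, +oo[%classic < 1)%E &
      (0 < G2 `]0%R, +oo[%classic < 1)%E].

End Defs.

(* Main.v *)
Require Import Defs.
From HB Require Import structures.
From mathcomp Require Import all_boot all_order all_algebra.
From mathcomp Require Import all_classical all_reals all_analysis.
From mathcomp Require Import measurable_realfun.
From mathcomp Require Import ring lra.
Import Order.TTheory GRing.Theory Num.Theory.
Local Open Scope classical_set_scope.
Local Open Scope ring_scope.
Section Aux.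
Context {R : realType}.
Implicit Types (mu nu : probability R R) (g : R * R -> R).

Definition symf g := forall x y, g (x, y) = g (y, x).
Definition unitv g := forall v, 0 <= g v <= 1.
Definition sec mu g (t : R) : \bar R := (\int[mu]_y (g (t, y))%:E)%E.

Lemma mg_pair1 g : measurable_fun setT g -> forall t, measurable_fun setT (fun y => g (t, y)).
Proof. move=> mg t; exact: (measurableT_comp mg (pair1_measurable t)). Qed.

Lemma mg_pair2 g : measurable_fun setT g -> forall t, measurable_fun setT (fun y => g (y, t)).
Proof. move=> mg t; exact: (measurableT_comp mg (pair2_measurable t)). Qed.

Lemma sec_ge0 mu g t : unitv g -> (0 <= sec mu g t)%E.
Proof. by move=> ug; apply: integral_ge0 => y _; rewrite lee_fin; case/andP: (ug (t, y)). Qed.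

Lemma sec_le1 mu g t : measurable_fun setT g -> unitv g -> (sec mu g t <= 1)%E.
Proof.
move=> mg ug; rewrite /sec.
apply: (@le_trans _ _ (\int[mu]_y (cst 1%E y))%E).
  apply: ge0_le_integral => //.
  - by move=> y _; rewrite lee_fin; case/andP: (ug (t, y)).
  - by apply/measurable_EFinP; exact: mg_pair1.
  - by move=> y _; rewrite lee_fin; case/andP: (ug (t, y)).
rewrite integral_cst //.
by rewrite mul1e; exact: probability_le1.
Qed.

Lemma psetT mu : mu [set: R] = 1%E.
Proof. exact: probability_setT. Qed.

Lemma unit0 {g v} : unitv g -> 0 <= g v.
Proof. by move=> ug; case/andP: (ug v). Qed.
Lemma unit1 {g v} : unitv g -> g v <= 1.
Proof. by move=> ug; case/andP: (ug v). Qed.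

Lemma m_fst {k : R -> R} : measurable_fun setT k ->
  measurable_fun setT (fun v : R * R => k v.1).
Proof. by move=> mk; exact: (measurableT_comp mk measurable_fst). Qed.
Lemma m_snd {k : R -> R} : measurable_fun setT k ->
  measurable_fun setT (fun v : R * R => k v.2).
Proof. by move=> mk; exact: (measurableT_comp mk measurable_snd). Qed.

Lemma prod1 mu nu g (k : R -> R) : measurable_fun setT g -> unitv g ->
  measurable_fun setT k -> (forall t, 0 <= k t) ->
  (\int[mu \x nu]_v (k v.1 * g v)%:E = \int[mu]_t ((k t)%:E * sec nu g t))%E.
Proof.
move=> mg ug mk k0.
rewrite fubini_tonelli1 /=; last 2 first.
- apply/measurable_EFinP. exact: measurable_funM (m_fst mk) mg.
- by move=> v; rewrite lee_fin mulr_ge0 // (unit0 ug).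
apply: eq_integral => t _; rewrite /fubini_F /sec.
under eq_integral => y _ do rewrite EFinM /=.
rewrite ge0_integralZl //.
- by apply/measurable_EFinP; exact: mg_pair1.
- by move=> y _; rewrite lee_fin (unit0 ug).
- by rewrite lee_fin.
Qed.

Lemma prod2 mu nu g (k : R -> R) : measurable_fun setT g -> unitv g -> symf g ->
  measurable_fun setT k -> (forall t, 0 <= k t) ->
  (\int[mu \x nu]_v (k v.2 * g v)%:E = \int[nu]_t ((k t)%:E * sec mu g t))%E.
Proof.
move=> mg ug sg mk k0.
rewrite fubini_tonelli2 /=; last 2 first.
- apply/measurable_EFinP; exact: measurable_funM (m_snd mk) mg.
- by move=> v; rewrite lee_fin mulr_ge0 // (unit0 ug).
apply: eq_integral => t _; rewrite /fubini_G /sec.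
under eq_integral => y _ do rewrite EFinM /= sg.
rewrite ge0_integralZl //.
- by apply/measurable_EFinP; exact: mg_pair1.
- by move=> y _; rewrite lee_fin (unit0 ug).
- by rewrite lee_fin.
Qed.

Lemma ind_ge0 (A : set R) t : 0 <= \1_A t :> R.
Proof. by rewrite indicE. Qed.

Lemma core mu nu g (A : set R) : measurable A -> measurable_fun setT g -> unitv g -> symf g ->
  (\int[mu]_t ((\1_A t)%:E * sec nu g t) <=
   mu A * nu A + \int[nu]_t ((\1_(~` A) t)%:E * sec mu g t))%E.
Proof.
move=> mA mg ug sg.
have mA' : measurable (~` A) by exact: measurableC.
rewrite -(@prod1 mu nu g (\1_A) mg ug (measurable_indic mA) (ind_ge0 A)).
rewrite -(@prod2 mu nu g (\1_(~` A)) mg ug sg (measurable_indic mA') (ind_ge0 _)).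
apply: (@le_trans _ _ (\int[mu \x nu]_v ((\1_(A `*` A) v)%:E + (\1_(~` A) v.2 * g v)%:E))%E).
  apply: ge0_le_integral => //.
  - by move=> v _; rewrite lee_fin mulr_ge0 // ?ind_ge0 // (unit0 ug).
  - apply/measurable_EFinP; exact: measurable_funM (m_fst (measurable_indic mA)) mg.
  - apply: emeasurable_funD.
      by apply/measurable_EFinP; apply: measurable_indic; exact: measurableX.
    apply/measurable_EFinP; exact: measurable_funM (m_snd (measurable_indic mA')) mg.
  - move=> [x y] _ /=; rewrite -EFinD lee_fin !indicE in_setX in_setC /=.
    have g0 := unit0 (v := (x, y)) ug; have g1 := unit1 (v := (x, y)) ug.
    by case: (x \in A); case: (y \in A); rewrite /= ?mul0r ?mul1r ?add0r ?addr0 ?lexx.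
rewrite ge0_integralD //.
- rewrite integral_indic //; last exact: measurableX.
  rewrite setIT.
  by rewrite [X in (X + _ <= _)%E](_ : _ = (mu A * nu A)%E) //; exact: product_measure1E.
- by apply/measurable_EFinP; apply: measurable_indic; exact: measurableX.
- by move=> v _; rewrite lee_fin mulr_ge0 // ?ind_ge0 // (unit0 ug).
- apply/measurable_EFinP; exact: measurable_funM (m_snd (measurable_indic mA')) mg.
Qed.

Definition fullon mu (V : set R) :=
  exists S : set R, [/\ measurable S, mu S = 0%E & ~` V `<=` S].

Lemma eval mu (V A : set R) (h : R -> \bar R) (c : R) :
  fullon mu V -> measurable A -> measurable_fun setT h ->
  (forall t, V t -> A t -> h t = c%:E) ->
  (\int[mu]_t ((\1_A t)%:E * h t) = c%:E * mu A)%E.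
Proof.
move=> [S [mS S0 VS]] mA mh hc.
transitivity (\int[mu]_t ((\1_A t)%:E * c%:E))%E.
  apply: ae_eq_integral => //.
  - apply: emeasurable_funM => //; apply/measurable_EFinP; exact: measurable_indic.
  - apply: emeasurable_funM => //; apply/measurable_EFinP; exact: measurable_indic.
  exists S; split => // x /= Hx; apply: VS => Vx; apply: Hx => _.
  rewrite indicE; case: (boolP (x \in A)) => xA; last by rewrite !mul0e.
  by rewrite hc //; exact/set_mem.
rewrite integralZr //; last exact: integrable_indic.
by rewrite integral_indic // setIT muleC.
Qed.

Lemma icst mu (c : \bar R) : (\int[mu]_y c = c)%E.
Proof. by rewrite integral_cst // [X in (_ * X)%E](_ : _ = 1%E) ?mule1 //; exact: probability_setT. Qed.

Lemma m_sec mu g : measurable_fun setT g -> unitv g -> measurable_fun setT (sec mu g).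
Proof.
move=> mg ug.
apply: (measurable_fun_fubini_tonelli_F (fun v => (g v)%:E)).
  by apply/measurable_EFinP.
by move=> v; rewrite lee_fin (unit0 ug).
Qed.

Lemma int_sec mu g t : measurable_fun setT g -> unitv g ->
  mu.-integrable setT (fun y => (g (t, y))%:E).
Proof.
move=> mg ug.
apply: (@le_integrable _ _ _ _ _ measurableT _ (EFin \o cst 1)).
- by apply/measurable_EFinP; exact: mg_pair1.
- move=> y _ /=; rewrite lee_fin ger0_norm ?(unit0 ug) //.
  by rewrite normr1 (unit1 ug).
- exact: finite_measure_integrable_cst.
Qed.

Lemma int_fst mu nu : mu.-integrable setT (EFin \o id) ->
  (mu \x nu)%E.-integrable setT (fun v : R * R => (v.1)%:E).
Proof.
move=> /integrableP [mid iid]; apply/integrableP; split.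
  by apply/measurable_EFinP; exact: measurable_fst.
rewrite fubini_tonelli1 //=; last first.
  apply/measurable_EFinP; apply: m_fst; exact: normr_measurable.
rewrite /fubini_F /=.
under eq_integral => t _ do rewrite icst.
exact: iid.
Qed.

Lemma int_snd mu nu : nu.-integrable setT (EFin \o id) ->
  (mu \x nu)%E.-integrable setT (fun v : R * R => (v.2)%:E).
Proof.
move=> /integrableP [mid iid]; apply/integrableP; split.
  by apply/measurable_EFinP; exact: measurable_snd.
rewrite fubini_tonelli2 //=; last first.
  apply/measurable_EFinP; apply: m_snd; exact: normr_measurable.
rewrite /fubini_G /=.
under eq_integral => t _ do rewrite icst.
exact: iid.
Qed.

Lemma welf mu nu g : measurable_fun setT g -> unitv g -> symf g ->
  mu.-integrable setT (EFin \o id) -> nu.-integrable setT (EFin \o id) ->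
  (\int[mu \x nu]_v (g v * (v.1 + v.2))%:E =
   \int[mu]_t (t%:E * sec nu g t) + \int[nu]_t (t%:E * sec mu g t))%E.
Proof.
move=> mg ug sg imu inu.
have i1 : (mu \x nu)%E.-integrable setT (fun v : R * R => (g v * v.1)%:E).
  apply: (@le_integrable _ _ _ _ _ measurableT _ (fun v : R * R => (v.1)%:E)).
  - by apply/measurable_EFinP; apply: measurable_funM => //; exact: measurable_fst.
  - move=> v _ /=; rewrite lee_fin normrM ler_piMl //.
    by rewrite ger0_norm ?(unit0 ug) ?(unit1 ug).
  - exact: int_fst.
have i2 : (mu \x nu)%E.-integrable setT (fun v : R * R => (g v * v.2)%:E).
  apply: (@le_integrable _ _ _ _ _ measurableT _ (fun v : R * R => (v.2)%:E)).
  - by apply/measurable_EFinP; apply: measurable_funM => //; exact: measurable_snd.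
  - move=> v _ /=; rewrite lee_fin normrM ler_piMl //.
    by rewrite ger0_norm ?(unit0 ug) ?(unit1 ug).
  - exact: int_snd.
under eq_integral => v _ do rewrite mulrDr EFinD.
rewrite integralD // -(integral12_prod_meas1 i1) -(integral21_prod_meas1 i2).
have -> : fubini_F nu (fun v : R * R => (g v * v.1)%:E) = (fun t => t%:E * sec nu g t)%E.
  apply/funext => t; rewrite /fubini_F /sec /=.
  under eq_integral => y _ do rewrite EFinM.
  rewrite integralZr //; [by rewrite muleC | exact: int_sec].
have -> : fubini_G mu (fun v : R * R => (g v * v.2)%:E) = (fun t => t%:E * sec mu g t)%E.
  apply/funext => t; rewrite /fubini_G /sec /=.
  under eq_integral => y _ do rewrite EFinM sg.
  rewrite integralZr //; [by rewrite muleC | exact: int_sec].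
by [].
Qed.
End Aux.
Section Aux2.
Context {R : realType}.
Implicit Types (mu nu : probability R R) (g : R * R -> R).

Definition Apos : set R := `]0%R, +oo[%classic.

Lemma ApE t : Apos t = (0 < t).
Proof. by rewrite /Apos /= in_itv /= andbT. Qed.

Lemma mApos : measurable Apos.
Proof. exact: measurable_itv. Qed.

Definition apos mu : R := fine (\int[mu]_t (t * \1_Apos t)%:E)%E.
Definition aneg mu : R := fine (\int[mu]_t (t * \1_(~` Apos) t)%:E)%E.

Lemma int_cut mu (B : set R) : measurable B -> mu.-integrable setT (EFin \o id) ->
  mu.-integrable setT (fun t => (t * \1_B t)%:E).
Proof.
move=> mB imu.
apply: (@le_integrable _ _ _ _ _ measurableT _ (EFin \o id)) => //.
- by apply/measurable_EFinP; apply: measurable_funM => //; exact: measurable_indic.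
- move=> t _ /=; rewrite lee_fin normrM indicE.
  by case: (t \in B); rewrite ?normr1 ?normr0 ?mulr1 ?mulr0.
Qed.

Lemma memA t : (t \in Apos) = (0 < t).
Proof. by apply/idP/idP => [/set_mem|H]; [rewrite ApE | apply/mem_set; rewrite ApE]. Qed.

Lemma split_lin mu (V : set R) (h : R -> \bar R) (X Y : R) :
  fullon mu V -> measurable_fun setT h -> mu.-integrable setT (EFin \o id) ->
  (forall t, V t -> 0 < t -> h t = X%:E) -> (forall t, V t -> t <= 0 -> h t = Y%:E) ->
  (\int[mu]_t (t%:E * h t) = (X * apos mu + Y * aneg mu)%:E)%E.
Proof.
move=> [S [mS S0 VS]] mh imu hX hY.
have ip := int_cut mu _ mApos imu; have iN := int_cut mu _ (measurableC mApos) imu.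
have ipX := integrableZl measurableT X ip; have iNY := integrableZl measurableT Y iN.
transitivity (\int[mu]_t (X%:E * (t * \1_Apos t)%:E + Y%:E * (t * \1_(~` Apos) t)%:E))%E.
  apply: ae_eq_integral => //.
  - apply: emeasurable_funM => //; apply/measurable_EFinP; exact: measurable_id.
  - by apply: emeasurable_funD; [exact: measurable_int ipX | exact: measurable_int iNY].
  exists S; split => // x /= Hx; apply: VS => Vx; apply: Hx => _.
  rewrite !indicE in_setC memA.
  have [x0|x0] := ltP 0 x.
    by rewrite hX //= mulr1 mulr0 mule0 adde0 -EFinM mulrC.
  by rewrite hY //= mulr1 mulr0 mule0 add0e -EFinM mulrC.
rewrite integralD // !integralZl // /apos /aneg EFinD !EFinM !fineK //.
- exact: integrable_fin_num iN.
- exact: integrable_fin_num ip.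
Qed.

Lemma prE mu {B : set R} : measurable B -> mu B = (fine (mu B))%:E.
Proof.
move=> mB; rewrite fineK // ge0_fin_numE //.
by apply: (le_lt_trans (probability_le1 mu mB)); exact: ltey.
Qed.

Definition pr mu : R := fine (mu Apos).

Lemma pr_ge0 mu : 0 <= pr mu.
Proof. by rewrite /pr fine_ge0. Qed.
Lemma pr_le1 mu : pr mu <= 1.
Proof. by rewrite /pr -lee_fin -prE ?probability_le1 //; exact: mApos. Qed.

Lemma prC mu : mu (~` Apos) = (1 - pr mu)%:E.
Proof. by rewrite probability_setC; [rewrite (prE mu mApos) | exact: mApos]. Qed.

Lemma consb mu nu g (V : set R) (X Y : R) : fullon mu V -> fullon nu V ->
  measurable_fun setT g -> unitv g -> symf g ->
  (forall t, V t -> 0 < t -> sec nu g t = X%:E) ->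
  (forall t, V t -> t <= 0 -> sec mu g t = Y%:E) ->
  X * pr mu <= pr mu * pr nu + Y * (1 - pr nu).
Proof.
move=> fmu fnu mg ug sg hX hY.
have := core mu nu _ _ mApos mg ug sg.
rewrite (@eval _ mu V Apos (sec nu g) X) //; last 2 first.
- exact: m_sec.
- by move=> t Vt; rewrite ApE; exact: hX.
rewrite (@eval _ nu V (~` Apos) (sec mu g) Y) //; last 3 first.
- exact: measurableC mApos.
- exact: m_sec.
- by move=> t Vt /=; rewrite ApE => /negP; rewrite -leNgt; exact: hY.
rewrite prC (prE mu mApos) (prE nu mApos) -!EFinM -EFinD lee_fin.
  by []. exact: mApos.
Qed.

Definition Jq (q : rat) (k : nat) : set R :=
  `](ratr q - k.+1%:R^-1), (ratr q + k.+1%:R^-1)[%classic.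

Lemma supp_full mu : fullon mu (dsupport mu).
Proof.
pose F (n : nat) : set R := if (unpickle n : option (rat * nat)) is Some (q, k) then
   (if mu (Jq q k) == 0%E then Jq q k else set0) else set0.
have nF : forall n, mu.-negligible (F n).
  move=> n; rewrite /F; case: (unpickle n) => [[q k]|]; last exact: negligible_set0.
  case: eqP => [H|_]; last exact: negligible_set0.
  by exists (Jq q k); split => //; exact: measurable_itv.
have: mu.-negligible (\bigcup_n F n) by exact: negligible_bigcup.
apply: negligibleS => x /= nx.
have [e [e0 He]] : exists e : R, 0 < e /\ mu `](x - e), (x + e)[%classic = 0%E.
  move/existsNP: nx => [e /not_implyP [e0 He]]; exists e; split => //.
  apply/eqP; rewrite eq_le measure_ge0 andbT; by rewrite leNgt; apply/negP.
pose k := Num.truncn (2 / e).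
have hk : k.+1%:R^-1 < e / 2.
  have h2 : 2 / e < k.+1%:R := truncnS_gt _.
  have h3 : 2 < k.+1%:R * e by rewrite -ltr_pdivrMr.
  rewrite ltr_pdivlMr // mulrC ltr_pdivrMr ?ltr0n //.
  by rewrite mulrC.
set dd := k.+1%:R^-1 : R.
have d0 : 0 < dd by rewrite invr_gt0 ltr0n.
have hk2 : dd < e / 2 := hk.
have xlt : x - dd < x + dd by lra.
have [q] := rat_in_itvoo xlt.
rewrite in_itv /= => /andP [q1 q2].
have Jx : Jq q k x by rewrite /Jq /= in_itv /=; apply/andP; split; rewrite -/dd; lra.
have JS : Jq q k `<=` `](x - e), (x + e)[%classic.
  move=> y; rewrite /Jq /= !in_itv /= -/dd => /andP [y1 y2].
  apply/andP; split; lra.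
have J0 : mu (Jq q k) = 0%E.
  apply/eqP; rewrite eq_le measure_ge0 andbT -He; apply: le_measure.
  - by rewrite inE; exact: measurable_itv.
  - by rewrite inE; exact: measurable_itv.
  - exact: JS.
exists (pickle (q, k)); first by [].
rewrite /F pickleK J0 eqxx; exact: Jx.
Qed.
End Aux2.
Section Aux3.
Context {R : realType}.
Implicit Types (mu nu : probability R R) (g : R * R -> R).

Lemma qmaj1E (v : R * R) : qmaj 1 v = \1_Apos v.1 + (1 - \1_Apos v.1) * \1_Apos v.2.
Proof.
rewrite /qmaj /nb_pos !indicE !memA.
by case: (0 < v.1); case: (0 < v.2); rewrite /= ?subrr ?mul0r ?addr0 ?subr0 ?mul1r ?add0r.
Qed.

Lemma qmaj2E (v : R * R) : qmaj 2 v = \1_Apos v.1 * \1_Apos v.2.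
Proof.
rewrite /qmaj /nb_pos !indicE !memA.
by case: (0 < v.1); case: (0 < v.2); rewrite /= ?mul0r ?mul1r.
Qed.

Lemma m_qmaj1 : measurable_fun setT (qmaj 1 : R * R -> R).
Proof.
rewrite (_ : qmaj 1 = fun v : R * R => \1_Apos v.1 + (1 - \1_Apos v.1) * \1_Apos v.2);
  last by apply/funext => v; rewrite qmaj1E.
apply: measurable_funD; first exact: m_fst (measurable_indic mApos).
apply: measurable_funM; last exact: m_snd (measurable_indic mApos).
apply: measurable_funB; first exact: measurable_cst.
exact: m_fst (measurable_indic mApos).
Qed.

Lemma m_qmaj2 : measurable_fun setT (qmaj 2 : R * R -> R).
Proof.
rewrite (_ : qmaj 2 = fun v : R * R => \1_Apos v.1 * \1_Apos v.2);
  last by apply/funext => v; rewrite qmaj2E.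
apply: measurable_funM; first exact: m_fst (measurable_indic mApos).
exact: m_snd (measurable_indic mApos).
Qed.

Lemma u_qmaj k : unitv (qmaj k : R * R -> R).
Proof. by move=> v; rewrite /qmaj; case: ifP; rewrite /= ?lexx ?ler01. Qed.

Lemma s_qmaj k : symf (qmaj k : R * R -> R).
Proof. by move=> x y; rewrite /qmaj /nb_pos /= addnC. Qed.

Lemma sec_q1 nu t : sec nu (qmaj 1) t = (if 0 < t then 1 else pr nu)%:E.
Proof.
rewrite /sec; under eq_integral => y _ do rewrite qmaj1E /= indicE memA.
case: ifP => t0 /=.
  under eq_integral => y _ do rewrite subrr mul0r addr0.
  exact: icst.
under eq_integral => y _ do rewrite subr0 mul1r add0r.
rewrite integral_indic ?setIT; [exact: prE mApos | done | exact: mApos].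
Qed.

Lemma sec_q2 nu t : sec nu (qmaj 2) t = (if 0 < t then pr nu else 0)%:E.
Proof.
rewrite /sec; under eq_integral => y _ do rewrite qmaj2E /= indicE memA.
case: ifP => t0 /=.
  under eq_integral => y _ do rewrite mul1r.
  rewrite integral_indic ?setIT; [exact: prE mApos | done | exact: mApos].
under eq_integral => y _ do rewrite mul0r.
exact: icst.
Qed.

Lemma apos_ge0 mu : 0 <= apos mu.
Proof.
rewrite /apos fine_ge0 //; apply: integral_ge0 => t _.
by rewrite lee_fin indicE memA; case: ltP => t0; rewrite ?mulr1 ?mulr0 // ltW.
Qed.

Lemma aneg_le0 mu : mu.-integrable setT (EFin \o id) -> aneg mu <= 0.
Proof.
move=> imu; rewrite /aneg fine_le0 //.
rewrite -(integral0 mu setT).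
apply: le_integral => //.
- exact: int_cut (measurableC mApos) imu.
- exact: (finite_measure_integrable_cst _ 0).
- move=> t _; rewrite lee_fin indicE in_setC memA.
  by case: ltP => t0; rewrite /= ?mulr1 ?mulr0.
Qed.

Lemma wform mu nu h (V : set R) (X1 Y1 X2 Y2 : R) :
  fullon mu V -> fullon nu V ->
  mu.-integrable setT (EFin \o id) -> nu.-integrable setT (EFin \o id) ->
  measurable_fun setT h -> unitv h -> symf h ->
  (forall t, V t -> 0 < t -> sec nu h t = X1%:E) ->
  (forall t, V t -> t <= 0 -> sec nu h t = Y1%:E) ->
  (forall t, V t -> 0 < t -> sec mu h t = X2%:E) ->
  (forall t, V t -> t <= 0 -> sec mu h t = Y2%:E) ->
  welfare mu nu h = (X1 * apos mu + Y1 * aneg mu + (X2 * apos nu + Y2 * aneg nu))%:E.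
Proof.
move=> fmu fnu imu inu mh uh sh h1 h2 h3 h4.
rewrite /welfare welf // (@split_lin _ mu V _ X1 Y1) //; last exact: m_sec.
by rewrite (@split_lin _ nu V _ X2 Y2) //; exact: m_sec.
Qed.

Definition clamp (x : R) : R := Num.min (Num.max x 0) 1.
Definition gsym g (v : R * R) : R := (clamp (g v) + clamp (g (v.2, v.1))) / 2.

Lemma clamp01 x : 0 <= clamp x <= 1.
Proof.
rewrite /clamp le_min ge_min le_max lexx ler01 lexx /=.
by rewrite !orbT.
Qed.

Lemma clampE x : 0 <= x <= 1 -> clamp x = x.
Proof. by move=> /andP [x0 x1]; rewrite /clamp (max_idPl x0) (min_idPl x1). Qed.

Lemma m_clamp (f : R * R -> R) : measurable_fun setT f ->
  measurable_fun setT (fun v => clamp (f v)).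
Proof.
move=> mf; apply: measurable_minr; last exact: measurable_cst.
by apply: measurable_maxr => //; exact: measurable_cst.
Qed.

Lemma m_gsym g : measurable_fun setT g -> measurable_fun setT (gsym g).
Proof.
move=> mg; apply: measurable_funM; last exact: measurable_cst.
apply: measurable_funD; first exact: m_clamp.
apply: (m_clamp (fun v : R * R => g (v.2, v.1))).
exact: measurableT_comp mg (measurable_fun_pair measurable_snd measurable_fst).
Qed.

Lemma u_gsym g : unitv (gsym g).
Proof.
move=> v; rewrite /gsym.
have /andP [a0 a1] := clamp01 (g v); have /andP [b0 b1] := clamp01 (g (v.2, v.1)).
apply/andP; split; first by rewrite divr_ge0 // addr_ge0.
rewrite ler_pdivrMr //; lra.
Qed.

Lemma s_gsym g : symf (gsym g).
Proof. by move=> x y; rewrite /gsym /= addrC. Qed.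

Lemma gsymE g (V : set R) x y : is_SCF V g -> anonymous V g -> V x -> V y ->
  gsym g (x, y) = g (x, y).
Proof.
move=> [_ b] an Vx Vy; rewrite /gsym /= -an // !clampE; try exact: b.
by field.
Qed.

Lemma welf_gsym mu nu (V : set R) g : fullon mu V -> fullon nu V ->
  is_SCF V g -> anonymous V g -> welfare mu nu g = welfare mu nu (gsym g).
Proof.
move=> [S1 [mS1 S10 VS1]] [S2 [mS2 S20 VS2]] sc an.
have mg := sc.1.
rewrite /welfare; apply: ae_eq_integral => //.
- apply/measurable_EFinP; apply: measurable_funM => //.
  by apply: measurable_funD; [exact: measurable_fst | exact: measurable_snd].
- apply/measurable_EFinP; apply: measurable_funM; first exact: m_gsym.
  by apply: measurable_funD; [exact: measurable_fst | exact: measurable_snd].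
have n1 : (mu \x nu)%E.-negligible (S1 `*` setT).
  exists (S1 `*` setT); split => //; first exact: measurableX.
  by rewrite product_measure1E // [X in (X * _)%E](_ : _ = 0%E) ?mul0e.
have n2 : (mu \x nu)%E.-negligible (setT `*` S2).
  exists (setT `*` S2); split => //; first exact: measurableX.
  by rewrite product_measure1E // [X in (_ * X)%E](_ : _ = 0%E) ?mule0.
apply: (negligibleS _ (negligibleU n1 n2)) => -[x y] /= H.
case: (pselect (V x)) => Vx; last by left; split => //; exact: VS1.
case: (pselect (V y)) => Vy; last by right; split => //; exact: VS2.
exfalso; apply: H => _; by rewrite (gsymE _ _ _ _ sc an Vx Vy).
Qed.

Lemma int1_gsym nu (V : set R) g t : fullon nu V ->
  is_SCF V g -> anonymous V g -> V t -> interim1 nu g t = sec nu (gsym g) t.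
Proof.
move=> [S2 [mS2 S20 VS2]] sc an Vt.
have mg := sc.1.
rewrite /interim1 /sec; apply: ae_eq_integral => //.
- by apply/measurable_EFinP; exact: mg_pair1.
- by apply/measurable_EFinP; apply: mg_pair1; exact: m_gsym.
exists S2; split => // y /= H.
case: (pselect (V y)) => Vy; last exact: VS2.
exfalso; apply: H => _; by rewrite (gsymE _ _ _ _ sc an Vt Vy).
Qed.

Lemma int2_gsym mu (V : set R) g t : fullon mu V ->
  is_SCF V g -> anonymous V g -> V t -> interim2 mu g t = sec mu (gsym g) t.
Proof.
move=> [S1 [mS1 S10 VS1]] sc an Vt.
have mg := sc.1.
rewrite /interim2 /sec.
transitivity (\int[mu]_x (gsym g (x, t))%:E)%E.
  apply: ae_eq_integral => //.
  - by apply/measurable_EFinP; exact: mg_pair2.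
  - by apply/measurable_EFinP; apply: mg_pair2; exact: m_gsym.
  exists S1; split => // y /= H.
  case: (pselect (V y)) => Vy; last exact: VS1.
  exfalso; apply: H => _; by rewrite (gsymE _ _ _ _ sc an Vy Vt).
by apply: eq_integral => x _; rewrite s_gsym.
Qed.

Lemma finE (x : \bar R) : (0 <= x)%E -> (x <= 1)%E -> x = (fine x)%:E.
Proof.
move=> x0 x1; rewrite fineK // ge0_fin_numE //.
by apply: (le_lt_trans x1); exact: ltey.
Qed.

Lemma bic_const (V : set R) (I : R -> \bar R) (t1 s1 : R) :
  ~ V 0 -> (forall t, 0 <= I t)%E -> (forall t, I t <= 1)%E ->
  (forall v v', V v -> V v' -> (v%:E * I v' <= v%:E * I v)%E) ->
  V t1 -> 0 < t1 -> V s1 -> s1 <= 0 ->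
  (forall t, V t -> 0 < t -> I t = I t1) /\ (forall t, V t -> t <= 0 -> I t = I s1).
Proof.
move=> nV0 I0 I1 bic Vt1 t10 Vs1 s10.
have IE t : I t = (fine (I t))%:E by exact: finE.
have B v v' : V v -> V v' -> v * fine (I v') <= v * fine (I v).
  by move=> Vv Vv'; have := bic v v' Vv Vv'; rewrite (IE v) (IE v') -!EFinM lee_fin.
have ne0 t : V t -> t != 0 by move=> Vt; apply/eqP => t0; apply: nV0; rewrite -t0.
have s1n : s1 < 0 by rewrite lt_neqAle s10 ne0.
split => t Vt t0.
  rewrite (IE t) (IE t1); congr EFin; apply/eqP; rewrite eq_le.
  by rewrite -(ler_pM2l t10) B //= -(ler_pM2l t0) B.
have tn : t < 0 by rewrite lt_neqAle t0 ne0.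
rewrite (IE t) (IE s1); congr EFin; apply/eqP; rewrite eq_le.
by rewrite -(ler_nM2l tn) B //= -(ler_nM2l s1n) B.
Qed.

End Aux3.

Lemma alg (R : realFieldType) (a1 b1 a2 b2 p1 p2 X1 Y1 X2 Y2 : R) :
  0 <= a1 -> b1 <= 0 -> 0 <= a2 -> b2 <= 0 ->
  0 < p1 -> p1 < 1 -> 0 < p2 -> p2 < 1 ->
  X1 <= 1 -> X2 <= 1 -> 0 <= Y1 -> 0 <= Y2 ->
  X1 * p2 <= p2 * p2 + Y1 * (1 - p2) ->
  X2 * p1 <= p1 * p1 + Y2 * (1 - p1) ->
  X1 * p1 <= p1 * p2 + Y2 * (1 - p2) ->
  X2 * p2 <= p2 * p1 + Y1 * (1 - p1) ->
  X1 * a1 + Y1 * b1 + (X2 * a2 + Y2 * b2) <=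
  Num.max (1 * a1 + p2 * b1 + (1 * a2 + p1 * b2)) (p2 * a1 + 0 * b1 + (p1 * a2 + 0 * b2)).
Proof.
move=> a10 b10 a20 b20 p10 p11 p20 p21 X11 X21 Y10 Y20 hB hC hD hE.
have q1 : 0 < 1 - p1 by lra.
have q2 : 0 < 1 - p2 by lra.
pose u1 := (X1 - p2) / (1 - p2); pose u2 := (X2 - p1) / (1 - p1).
pose l := Num.max 0 (Num.max u1 u2).
have lY1 : l <= Y1 / p2.
  rewrite /l !ge_max; apply/and3P; split.
  - by rewrite divr_ge0 // ltW.
  - rewrite /u1 ler_pdivrMr // mulrAC ler_pdivlMr //; lra.
  - rewrite /u2 ler_pdivrMr // mulrAC ler_pdivlMr //; lra.
have lY2 : l <= Y2 / p1.
  rewrite /l !ge_max; apply/and3P; split.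
  - by rewrite divr_ge0 // ltW.
  - rewrite /u1 ler_pdivrMr // mulrAC ler_pdivlMr //; lra.
  - rewrite /u2 ler_pdivrMr // mulrAC ler_pdivlMr //; lra.
have l1 : l <= 1.
  rewrite /l !ge_max; apply/and3P; split => //.
  - by rewrite /u1 ler_pdivrMr //; lra.
  - by rewrite /u2 ler_pdivrMr //; lra.
have l0 : 0 <= l by rewrite /l le_max lexx.
have lu1 : u1 <= l by rewrite /l !le_max lexx orbT.
have lu2 : u2 <= l by rewrite /l !le_max lexx !orbT.
have hX1 : X1 <= p2 + l * (1 - p2).
  by move: lu1; rewrite /u1 ler_pdivrMr //; lra.
have hX2 : X2 <= p1 + l * (1 - p1).
  by move: lu2; rewrite /u2 ler_pdivrMr //; lra.
have hY1 : l * p2 <= Y1 by rewrite -ler_pdivlMr.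
have hY2 : l * p1 <= Y2 by rewrite -ler_pdivlMr.
have e1 : X1 * a1 <= (p2 + l * (1 - p2)) * a1 by rewrite ler_wpM2r.
have e2 : Y1 * b1 <= (l * p2) * b1 by rewrite ler_wnM2r.
have e3 : X2 * a2 <= (p1 + l * (1 - p1)) * a2 by rewrite ler_wpM2r.
have e4 : Y2 * b2 <= (l * p1) * b2 by rewrite ler_wnM2r.
set W1 := (1 * a1 + p2 * b1 + (1 * a2 + p1 * b2)).
set W2 := (p2 * a1 + 0 * b1 + (p1 * a2 + 0 * b2)).
have eW : (p2 + l * (1 - p2)) * a1 + (l * p2) * b1 + ((p1 + l * (1 - p1)) * a2 + (l * p1) * b2)
   = l * W1 + (1 - l) * W2 by rewrite /W1 /W2; ring.
have m1 : l * W1 <= l * Num.max W1 W2 by rewrite ler_wpM2l // le_max lexx.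
have m2 : (1 - l) * W2 <= (1 - l) * Num.max W1 W2 by rewrite ler_wpM2l ?subr_ge0 // le_max lexx orbT.
lra.
Qed.
Section Final.
Context {R : realType}.
Implicit Types (mu nu : probability R R) (g : R * R -> R).

Lemma bic_step (c d v w : R) : d <= c -> v != 0 ->
  v * (if 0 < w then c else d) <= v * (if 0 < v then c else d).
Proof.
move=> dc v0; case: (ltgtP v 0) => [vn|vp|/eqP]; last by rewrite (negbTE v0).
- rewrite ler_nM2l //; by case: ifP.
- rewrite ler_pM2l //; by case: ifP.
Qed.

Lemma qmaj_props mu nu (V : set R) k (c d : R -> R) : ~ V 0 ->
  measurable_fun setT (qmaj k : R * R -> R) ->
  (forall m t, sec m (qmaj k) t = (if 0 < t then c (fine (m Apos)) else d (fine (m Apos)))%:E) ->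
  d (fine (nu Apos)) <= c (fine (nu Apos)) -> d (fine (mu Apos)) <= c (fine (mu Apos)) ->
  [/\ is_SCF V (qmaj k), anonymous V (qmaj k) & BIC V mu nu (qmaj k)].
Proof.
move=> nV0 mq hs dc1 dc2; split.
- by split => // v _ _; exact: u_qmaj.
- by move=> x y _ _; exact: s_qmaj.
split => v v' Vv Vv'.
  rewrite /interim1 -/(sec nu (qmaj k) v') -/(sec nu (qmaj k) v) !hs -!EFinM lee_fin.
  by apply: bic_step => //; apply/eqP => v0; apply: nV0; rewrite -v0.
rewrite /interim2.
have E t : (\int[mu]_x ((qmaj k) (x, t))%:E)%E = sec mu (qmaj k) t.
  by apply: eq_integral => x _; rewrite s_qmaj.
rewrite !E !hs -!EFinM lee_fin.
by apply: bic_step => //; apply/eqP => v0; apply: nV0; rewrite -v0.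
Qed.

End Final.

Theorem theorem1 (R : realType) (G1 G2 : probability R R) :
  standing G1 G2 ->
  (solves_OPT (dsupport G1) G1 G2 (qmaj 1) \/ solves_OPT (dsupport G1) G1 G2 (qmaj 2)) /\
  (exists f, ordinal_scf (dsupport G1) f /\ solves_OPT (dsupport G1) G1 G2 f).
Proof.
move=> [sV nV0 [i1 i2] hp1 hp2].
have f1 : fullon G1 (dsupport G1) := supp_full G1.
have f2 : fullon G2 (dsupport G1) by rewrite sV; exact: supp_full.
set V := dsupport G1 in f1 f2 nV0 *.
have hp1' : (0 < G1 Apos < 1)%E := hp1.
have hp2' : (0 < G2 Apos < 1)%E := hp2.
rewrite (prE G1 mApos) !lte_fin -/(pr G1) in hp1'.
rewrite (prE G2 mApos) !lte_fin -/(pr G2) in hp2'.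
case/andP: hp1' => p10 p11; case/andP: hp2' => p20 p21.
have [t1 [Vt1 t10]] : exists t, V t /\ 0 < t.
  case: (pselect (exists t, V t /\ 0 < t)) => // H; exfalso.
  case: f1 => S [mS S0 VS].
  have : (G1 Apos <= G1 S)%E.
    apply: le_measure; [by rewrite inE; exact: mApos | by rewrite inE |].
    move=> t At; apply: VS => Vt; apply: H; exists t; split => //; by rewrite -ApE.
  by rewrite S0 (prE G1 mApos) lee_fin leNgt p10.
have [s1 [Vs1 s10]] : exists t, V t /\ t <= 0.
  case: (pselect (exists t, V t /\ t <= 0)) => // H; exfalso.
  case: f1 => S [mS S0 VS].
  have : (G1 (~` Apos) <= G1 S)%E.
    apply: le_measure; [by rewrite inE; exact: measurableC mApos | by rewrite inE |].
    move=> t At; apply: VS => Vt; apply: H; exists t; split => //.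
    by rewrite leNgt; apply/negP => t0; apply: At; rewrite ApE.
  by rewrite S0 prC lee_fin leNgt subr_gt0 p11.
have q1p := @qmaj_props _ G1 G2 V 1 (fun _ => 1) id nV0 m_qmaj1 (fun m t => sec_q1 m t)
  (pr_le1 G2) (pr_le1 G1).
have q2p := @qmaj_props _ G1 G2 V 2 id (fun _ => 0) nV0 m_qmaj2 (fun m t => sec_q2 m t)
  (pr_ge0 G2) (pr_ge0 G1).
set a1 := apos G1; set b1 := aneg G1; set a2 := apos G2; set b2 := aneg G2.
set W1 := 1 * a1 + pr G2 * b1 + (1 * a2 + pr G1 * b2).
set W2 := pr G2 * a1 + 0 * b1 + (pr G1 * a2 + 0 * b2).
have eW1 : welfare G1 G2 (qmaj 1) = W1%:E.
  rewrite /W1 /a1 /b1 /a2 /b2.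
  apply: (@wform _ G1 G2 (qmaj 1) V 1 (pr G2) 1 (pr G1) f1 f2 i1 i2 m_qmaj1 (@u_qmaj _ 1) (@s_qmaj _ 1)) => t _ t0;
    by rewrite sec_q1 ?t0 // ifN // -leNgt.
have eW2 : welfare G1 G2 (qmaj 2) = W2%:E.
  rewrite /W2 /a1 /b1 /a2 /b2.
  apply: (@wform _ G1 G2 (qmaj 2) V (pr G2) 0 (pr G1) 0 f1 f2 i1 i2 m_qmaj2 (@u_qmaj _ 2) (@s_qmaj _ 2)) => t _ t0;
    by rewrite sec_q2 ?t0 // ifN // -leNgt.
have main : forall g, is_SCF V g -> anonymous V g -> BIC V G1 G2 g ->
    (welfare G1 G2 g <= (Num.max W1 W2)%:E)%E.
  move=> g sc an [bic1 bic2].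
  set h := gsym g.
  have mh : measurable_fun setT h := m_gsym g sc.1.
  have uh : unitv h := @u_gsym _ g.
  have sh : symf h := @s_gsym _ g.
  have B1 : forall v v', V v -> V v' -> (v%:E * sec G2 h v' <= v%:E * sec G2 h v)%E.
    move=> v v' Vv Vv'; rewrite -!(int1_gsym _ _ _ _ f2 sc an) //; exact: bic1.
  have B2 : forall v v', V v -> V v' -> (v%:E * sec G1 h v' <= v%:E * sec G1 h v)%E.
    move=> v v' Vv Vv'; rewrite -!(int2_gsym _ _ _ _ f1 sc an) //; exact: bic2.
  have [C1p C1n] := bic_const _ _ _ _ nV0 (fun t => sec_ge0 G2 h t uh) (fun t => sec_le1 G2 h t mh uh)
    B1 Vt1 t10 Vs1 s10.
  have [C2p C2n] := bic_const _ _ _ _ nV0 (fun t => sec_ge0 G1 h t uh) (fun t => sec_le1 G1 h t mh uh)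
    B2 Vt1 t10 Vs1 s10.
  set X1 := fine (sec G2 h t1); set Y1 := fine (sec G2 h s1).
  set X2 := fine (sec G1 h t1); set Y2 := fine (sec G1 h s1).
  have E1 : forall m t, sec m h t = (fine (sec m h t))%:E.
    by move=> m t; apply: finE; [exact: sec_ge0 | exact: sec_le1].
  have H1p t : V t -> 0 < t -> sec G2 h t = X1%:E by move=> Vt t0; rewrite C1p // E1.
  have H1n t : V t -> t <= 0 -> sec G2 h t = Y1%:E by move=> Vt t0; rewrite C1n // E1.
  have H2p t : V t -> 0 < t -> sec G1 h t = X2%:E by move=> Vt t0; rewrite C2p // E1.
  have H2n t : V t -> t <= 0 -> sec G1 h t = Y2%:E by move=> Vt t0; rewrite C2n // E1.
  rewrite (welf_gsym _ _ _ _ f1 f2 sc an) -/h.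
  rewrite (wform _ _ _ _ _ _ _ _ f1 f2 i1 i2 mh uh sh H1p H1n H2p H2n) lee_fin.
  have hB := consb _ _ _ _ _ _ f2 f2 mh uh sh H1p H1n.
  have hC := consb _ _ _ _ _ _ f1 f1 mh uh sh H2p H2n.
  have hD := consb _ _ _ _ _ _ f1 f2 mh uh sh H1p H2n.
  have hE := consb _ _ _ _ _ _ f2 f1 mh uh sh H2p H1n.
  have X11 : X1 <= 1 by rewrite -lee_fin -E1; exact: sec_le1.
  have X21 : X2 <= 1 by rewrite -lee_fin -E1; exact: sec_le1.
  have Y10 : 0 <= Y1 by rewrite -lee_fin -E1; exact: sec_ge0.
  have Y20 : 0 <= Y2 by rewrite -lee_fin -E1; exact: sec_ge0.
  apply: alg => //; [exact: apos_ge0 | exact: aneg_le0 | exact: apos_ge0 | exact: aneg_le0].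
have [q1s q1a q1b] := q1p; have [q2s q2a q2b] := q2p.
have ord k : ordinal_scf V (qmaj k : R * R -> R).
  by move=> v w _ _ _ _ e1 e2; rewrite /qmaj /nb_pos e1 e2.
have [W21|W12] := leP W2 W1.
  have S1 : solves_OPT V G1 G2 (qmaj 1).
    split => // g sc an bic; rewrite eW1.
    by apply: (le_trans (main g sc an bic)); rewrite lee_fin (max_idPl W21).
  by split; [left | exists (qmaj 1)].
have S2 : solves_OPT V G1 G2 (qmaj 2).
  split => // g sc an bic; rewrite eW2.
  by apply: (le_trans (main g sc an bic)); rewrite lee_fin (max_idPr (ltW W12)).
by split; [right | exists (qmaj 2)].
Qed.
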